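(* Let $\mathcal{L}^-\subseteq\mathcal{L}$ be languages with $\mathcal{L}\setminus\mathcal{L}^-$ relational. Let $\mathbb{K}$ be an age in $\mathcal{L}$ such that both $\mathbb{K}$ and $\mathbb{K}\restriction\mathcal{L}^-$ are strong Fraïssé classes, let $\kappa$ be an infinite cardinal, and let $M^-$ be an $\mathcal{L}^-$-structure with $M^-\models \mathrm{Fr}_\kappa(\mathbb{K}\restriction\mathcal{L}^-)$. Suppose $\lambda\le \mathrm{cf}(\kappa)$ and $\mathbb{K}$ is closed under less than $\lambda$-unions. Then the partial order $\mathrm{Fn}^{M^-}_{\mathbb{K}}(\kappa)$ is $\lambda$-closed, i.e. for every $\gamma<\lambda$ and every sequence $\langle \mathcal{A}_i : i<\gamma\rangle$ of elements of $\mathrm{Fn}^{M^-}_{\mathbb{K}}(\kappa)$ with $\mathcal{A}_i\subseteq\mathcal{A}_j$ for $i<j<\gamma$, there is $\mathcal{B}\in\mathrm{Fn}^{M^-}_{\mathbb{K}}(\kappa)$ with $\mathcal{A}_i\subseteq\mathcal{B}$ for all $i<\gamma$.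
   Context: Languages may be many-sorted. For an $\mathcal{L}$-structure $\mathcal{M}$ and a set $A$ of its elements, the substructure generated by $A$ is the smallest substructure of $\mathcal{M}$ containing $A$ (closure of $A$ under all terms). $\mathcal{M}$ is $<\lambda$-generated if it is generated by a set of size $<\lambda$; for a tuple $\mathbf{a}$, ''$\mathbf{a}$ generates $\mathcal{A}$'' means the set of its entries does. An age in $\mathcal{L}$ is a class of $\mathcal{L}$-structures closed under isomorphism. For an age $\mathbb{K}$: $\mathbb{K}_\kappa$ is the class of elements of $\mathbb{K}$ that are $<\kappa$-generated; for $\mathcal{L}^-\subseteq\mathcal{L}$, $\mathbb{K}\restriction\mathcal{L}^-=\{\mathcal{A}\restriction\mathcal{L}^-:\mathcal{A}\in\mathbb{K}\}$. $\mathbb{K}$ has HP if it is closed under substructures; JEP if any two members embed in a common member; AP if for embeddings $i_1:\mathcal{A}_0\to\mathcal{A}_1$, $i_2:\mathcal{A}_0\to\mathcal{A}_2$ in $\mathbb{K}$ there are $\mathcal{A}_3\in\mathbb{K}$ and embeddings $j_1:\mathcal{A}_1\to\mathcal{A}_3$, $j_2:\mathcal{A}_2\to\mathcal{A}_3$ with $j_1\circ i_1=j_2\circ i_2$; SAP if moreover one can always choose these with $j_1[\mathcal{A}_1]\cap j_2[\mathcal{A}_2]=(j_1\circ i_1)[\mathcal{A}_0]$. A Fraïssé class is an age with HP, JEP, AP; a strong Fraïssé class is a Fraïssé class with SAP. $\mathbb{K}$ is closed under less than $\lambda$-unions if for every $\gamma<\lambda$ and every chain $(\mathcal{A}_i)_{i<\gamma}$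 in $\mathbb{K}$ with $\mathcal{A}_i\subseteq\mathcal{A}_j$ for $i<j$, $\bigcup_{i<\gamma}\mathcal{A}_i\in\mathbb{K}$. For an $\mathcal{L}$-structure $\mathcal{A}$ and tuple $\mathbf{a}$ in it, $\mathrm{qftp}^{\mathcal{A}}(\mathbf{a})(\mathbf{x})$ is the set of literals in variables $\mathbf{x}$ satisfied by $\mathbf{a}$ in $\mathcal{A}$. $\mathrm{Fr}_\kappa(\mathbb{K})\subseteq\mathcal{L}_{\infty\kappa}(\mathcal{L})$ is the theory with axioms: (a) for all $\mathcal{A}\in\mathbb{K}$ and tuples $\mathbf{a}$ generating $\mathcal{A}$: $(\exists\mathbf{x})\bigwedge\mathrm{qftp}^{\mathcal{A}}(\mathbf{a})(\mathbf{x})$; (b) for all $\mathcal{A},\mathcal{B}\in\mathbb{K}$ with $\mathcal{A}\subseteq\mathcal{B}$, $\mathbf{a}$ generating $\mathcal{A}$ and $\mathbf{b}$ generating $\mathcal{B}$: $(\forall\mathbf{x})[\bigwedge\mathrm{qftp}^{\mathcal{A}}(\mathbf{a})(\mathbf{x})\to(\exists\mathbf{y})\bigwedge\mathrm{qftp}^{\mathcal{B}}(\mathbf{a}\mathbf{b})(\mathbf{x}\mathbf{y})]$. For an $\mathcal{L}^-$-structure $M^-$, $\mathbb{K}[M^-]=\{\mathcal{A}\in\mathbb{K}:\mathcal{A}\restriction\mathcal{L}^-\text{ is a substructure of }M^-\}$. $\mathrm{Fn}^{M^-}_{\mathbb{K}}(\kappa)$ is the partial order whose elements are the structures in $\mathbb{K}_\kappa[M^-]$,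 ordered by $\mathcal{M}\le\mathcal{N}$ iff $\mathcal{N}\subseteq\mathcal{M}$ (substructure). *)

(* Defs.v *)
From Stdlib Require Import Arith.

Definition fin (n : nat) : Type := {i : nat | i < n}.

Definition card_le (A B : Type) : Prop :=
  exists f : A -> B, forall x y, f x = f y -> x = y.
Definition card_lt (A B : Type) : Prop := card_le A B /\ ~ card_le B A.

Definition well_order {T : Type} (R : T -> T -> Prop) : Prop :=
  (forall x, ~ R x x) /\
  (forall x y z, R x y -> R y z -> R x z) /\
  (forall x y, R x y \/ x = y \/ R y x) /\
  well_founded R.

(* A cardinal is represented as an initial ordinal: a well-ordered type
   each of whose proper initial segments has strictly smaller cardinality. *)
Definition is_infinite_cardinal {T : Type} (lt : T -> T -> Prop) : Prop :=
  well_order lt /\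
  card_le nat T /\
  (forall a : T, ~ card_le T {b : T | lt b a}).

Definition cofinal {T : Type} (lt : T -> T -> Prop) (X : T -> Prop) : Prop :=
  forall a : T, exists b, X b /\ (lt a b \/ a = b).

(* lambda <= cf(kappa): every cofinal subset of kappa has size >= lambda,
   since cf(kappa) is the least size of a cofinal subset. *)
Definition le_cf (Lam : Type) {T : Type} (lt : T -> T -> Prop) : Prop :=
  forall X : T -> Prop, cofinal lt X -> card_le Lam {b : T | X b}.

Record Language : Type := {
  sort : Type;
  fsym : Type;
  rsym : Type;
  farity : fsym -> nat;
  fsort : forall f : fsym, fin (farity f) -> sort;
  fcod : fsym -> sort;
  rarity : rsym -> nat;
  rsort : forall r : rsym, fin (rarity r) -> sort
}.

Arguments farity {_} _.
Arguments fsort {_} _ _.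
Arguments fcod {_} _.
Arguments rarity {_} _.
Arguments rsort {_} _ _.

Record Structure (L : Language) : Type := {
  dom : sort L -> Type;
  fint : forall f : fsym L, (forall i : fin (farity f), dom (fsort f i)) -> dom (fcod f);
  rint : forall r : rsym L, (forall i : fin (rarity r), dom (rsort r i)) -> Prop
}.

Arguments dom {_} _ _.
Arguments fint {_} _ _ _.
Arguments rint {_} _ _ _.

Section Basics.
Variable L : Language.

Definition is_embedding (A B : Structure L) (h : forall s, dom A s -> dom B s) : Prop :=
  (forall s x y, h s x = h s y -> x = y) /\
  (forall f args, h (fcod f) (fint A f args) = fint B f (fun i => h _ (args i))) /\
  (forall r args, rint A r args <-> rint B r (fun i => h _ (args i))).

Definition is_iso (A B : Structure L) (h : forall s, dom A s -> dom B s) : Prop :=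
  is_embedding A B h /\ (forall s (y : dom B s), exists x, h s x = y).

Definition isomorphic (A B : Structure L) : Prop := exists h, is_iso A B h.

Definition closed (A : Structure L) (D : forall s, dom A s -> Prop) : Prop :=
  forall f (args : forall i : fin (farity f), dom A (fsort f i)),
    (forall i, D _ (args i)) -> D _ (fint A f args).

Definition induce (A : Structure L) (D : forall s, dom A s -> Prop)
  (H : closed A D) : Structure L :=
  {| dom := fun s => {x : dom A s | D s x};
     fint := fun f args =>
       exist _ (fint A f (fun i => proj1_sig (args i)))
               (H f (fun i => proj1_sig (args i)) (fun i => proj2_sig (args i)));
     rint := fun r args => rint A r (fun i => proj1_sig (args i)) |}.

Definition generates (A : Structure L) (X : forall s, dom A s -> Prop) : Prop :=
  forall D, closed A D -> (forall s x, X s x -> D s x) -> forall s x, D s x.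

Definition lt_generated (Kap : Type) (A : Structure L) : Prop :=
  exists X : forall s, dom A s -> Prop,
    card_lt {s : sort L & {x : dom A s | X s x}} Kap /\ generates A X.

Definition age (K : Structure L -> Prop) : Prop :=
  forall A B, K A -> isomorphic A B -> K B.

Definition HP (K : Structure L -> Prop) : Prop :=
  forall A D (H : closed A D), K A -> K (induce A D H).

Definition JEP (K : Structure L -> Prop) : Prop :=
  forall A B, K A -> K B -> exists C j1 j2,
    K C /\ is_embedding A C j1 /\ is_embedding B C j2.

Definition AP (K : Structure L -> Prop) : Prop :=
  forall A0 A1 A2 i1 i2, K A0 -> K A1 -> K A2 ->
    is_embedding A0 A1 i1 -> is_embedding A0 A2 i2 ->
    exists A3 j1 j2, K A3 /\ is_embedding A1 A3 j1 /\ is_embedding A2 A3 j2 /\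
      (forall s x, j1 s (i1 s x) = j2 s (i2 s x)).

Definition SAP (K : Structure L -> Prop) : Prop :=
  forall A0 A1 A2 i1 i2, K A0 -> K A1 -> K A2 ->
    is_embedding A0 A1 i1 -> is_embedding A0 A2 i2 ->
    exists A3 j1 j2, K A3 /\ is_embedding A1 A3 j1 /\ is_embedding A2 A3 j2 /\
      (forall s x, j1 s (i1 s x) = j2 s (i2 s x)) /\
      (forall s (y : dom A3 s),
         ((exists x1, j1 s x1 = y) /\ (exists x2, j2 s x2 = y)) <->
         (exists x0, j1 s (i1 s x0) = y)).

Definition fraisse_class (K : Structure L -> Prop) : Prop :=
  age K /\ HP K /\ JEP K /\ AP K.

Definition strong_fraisse_class (K : Structure L -> Prop) : Prop :=
  fraisse_class K /\ SAP K.

(* A chain (A_i)_{i<gamma}, gamma an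
   ordinal < lambda, is represented by a well-ordered index type I of size
   < lambda, and substructures A_i (universes D i) of a common structure C
   (e.g. the union itself). *)
Definition union_closed (Lam : Type) (K : Structure L -> Prop) : Prop :=
  forall (I : Type) (ltI : I -> I -> Prop), well_order ltI -> card_lt I Lam ->
  forall (C : Structure L) (D : I -> forall s, dom C s -> Prop)
         (H : forall i, closed C (D i)),
    (forall i, K (induce C (D i) (H i))) ->
    (forall i j, ltI i j -> forall s x, D i s x -> D j s x) ->
    exists HU : closed C (fun s x => exists i, D i s x),
      K (induce C (fun s x => exists i, D i s x) HU).

Section Syntax.
Variables (J : Type) (sg : J -> sort L).

Inductive term : sort L -> Type :=
| tvar : forall j : J, term (sg j)
| tapp : forall f : fsym L,
    (forall i : fin (farity f), term (fsort f i)) -> term (fcod f).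

Inductive atomic : Type :=
| aeq : forall s, term s -> term s -> atomic
| arel : forall r : rsym L, (forall i : fin (rarity r), term (rsort r i)) -> atomic.

Inductive literal : Type :=
| lpos : atomic -> literal
| lneg : atomic -> literal.

Fixpoint teval (A : Structure L) (a : forall j, dom A (sg j)) s (t : term s)
  : dom A s :=
  match t in term s0 return dom A s0 with
  | tvar j => a j
  | tapp f args => fint A f (fun i => teval A a _ (args i))
  end.

Definition holds_atomic (A : Structure L) (a : forall j, dom A (sg j))
  (phi : atomic) : Prop :=
  match phi with
  | aeq s t1 t2 => teval A a s t1 = teval A a s t2
  | arel r args => rint A r (fun i => teval A a _ (args i))
  end.

Definition holds (A : Structure L) (a : forall j, dom A (sg j))
  (phi : literal) : Prop :=
  match phi with
  | lpos p => holds_atomic A a p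
  | lneg p => ~ holds_atomic A a p
  end.

Definition realizes_qftp (A : Structure L) (a : forall j, dom A (sg j))
  (M : Structure L) (m : forall j, dom M (sg j)) : Prop :=
  forall phi : literal, holds A a phi -> holds M m phi.

End Syntax.

Definition entries {J : Type} {sg : J -> sort L} (A : Structure L)
  (a : forall j, dom A (sg j)) : forall s, dom A s -> Prop :=
  fun s x => exists j, existT (dom A) (sg j) (a j) = existT (dom A) s x.

Definition sum_sort {J J' : Type} (sg : J -> sort L) (sg' : J' -> sort L)
  : J + J' -> sort L :=
  fun x => match x with inl j => sg j | inr j => sg' j end.

Definition tuple_app {J J' : Type} {sg : J -> sort L} {sg' : J' -> sort L}
  (A : Structure L) (a : forall j, dom A (sg j)) (b : forall j, dom A (sg' j))
  : forall x : J + J', dom A (sum_sort sg sg' x) :=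
  fun x => match x as x0 return dom A (sum_sort sg sg' x0) with
           | inl j => a j
           | inr j => b j
           end.

(* M |= Fr_kappa(K) ; tuples have length < kappa (as required in L_{infty kappa}) *)
Definition models_Fr (Kap : Type) (K : Structure L -> Prop) (M : Structure L) : Prop :=
  (forall (A : Structure L), K A ->
   forall (J : Type) (sg : J -> sort L) (a : forall j, dom A (sg j)),
     card_lt J Kap -> generates A (entries A a) ->
     exists m : forall j, dom M (sg j), realizes_qftp J sg A a M m) /\
  (forall (B : Structure L) (D : forall s, dom B s -> Prop) (H : closed B D),
     K B -> K (induce B D H) ->
   forall (J : Type) (sg : J -> sort L) (a : forall j, dom (induce B D H) (sg j))
          (J' : Type) (sg' : J' -> sort L) (b : forall j, dom B (sg' j)),
     card_lt J Kap -> card_lt J' Kap ->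
     generates (induce B D H) (entries (induce B D H) a) ->
     generates B (entries B b) ->
     forall m : forall j, dom M (sg j),
       realizes_qftp J sg (induce B D H) a M m ->
       exists n : forall j, dom M (sg' j),
         realizes_qftp (J + J') (sum_sort sg sg')
           B (tuple_app B (fun j => proj1_sig (a j)) b)
           M (tuple_app M m n)).

End Basics.

Arguments tvar {_ _ _} _.
Arguments tapp {_ _ _} _ _.

(* L^- consists of all sorts and function symbols of L and of the relation
   symbols r with P r = true; thus L \ L^- is relational. *)
Definition sublang (L : Language) (P : rsym L -> bool) : Language :=
  {| sort := sort L;
     fsym := fsym L;
     rsym := {r : rsym L | P r = true};
     farity := @farity L;
     fsort := @fsort L;
     fcod := @fcod L;
     rarity := fun r : {r : rsym L | P r = true} => rarity (proj1_sig r);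
     rsort := fun r : {r : rsym L | P r = true} => rsort (proj1_sig r) |}.

Definition reduct {L : Language} (P : rsym L -> bool) (A : Structure L)
  : Structure (sublang L P) :=
  Build_Structure (sublang L P) (dom A) (fint A)
    (fun (r : rsym (sublang L P)) => rint A (proj1_sig r)).

Definition restrict_age {L : Language} (P : rsym L -> bool)
  (K : Structure L -> Prop) : Structure (sublang L P) -> Prop :=
  fun B => exists A, K A /\ isomorphic (sublang L P) B (reduct P A).

(* An L-structure whose L^- reduct is a substructure of M^- is given by its
   universe D (a subset of M^- closed under all function symbols) together
   with interpretations of the relation symbols of L \ L^- (only their values
   on tuples from D matter). *)
Record FnCand {L : Language} (P : rsym L -> bool) (M : Structure (sublang L P))
  : Type := {
  fc_dom : forall s, dom M s -> Prop;
  fc_closed : closed (sublang L P) M fc_dom;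
  fc_rel : forall r : rsym L, (forall i : fin (@rarity L r), dom M (@rsort L r i)) -> Prop
}.

Arguments fc_dom {_ _ _} _ _ _.
Arguments fc_closed {_ _ _} _ _ _ _.
Arguments fc_rel {_ _ _} _ _ _.

Definition fc_struct {L : Language} {P : rsym L -> bool} {M : Structure (sublang L P)}
  (A : FnCand P M) : Structure L :=
  Build_Structure L (fun s => {x : dom M s | fc_dom A s x})
    (fun f args =>
       exist _ (fint M f (fun i => proj1_sig (args i)))
               (fc_closed A f (fun i => proj1_sig (args i))
                  (fun i => proj2_sig (args i))))
    (fun (r : rsym L) args =>
       (forall e : P r = true,
          rint M (exist (fun r0 => P r0 = true) r e) (fun i => proj1_sig (args i))) /\
       (P r = false -> fc_rel A r (fun i => proj1_sig (args i)))).

Definition in_Fn {L : Language} (P : rsym L -> bool) (K : Structure L -> Prop)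
  (Kap : Type) (M : Structure (sublang L P)) (A : FnCand P M) : Prop :=
  K (fc_struct A) /\ lt_generated L Kap (fc_struct A).

Definition fc_sub {L : Language} {P : rsym L -> bool} {M : Structure (sublang L P)}
  (A B : FnCand P M) : Prop :=
  (forall s x, fc_dom A s x -> fc_dom B s x) /\
  (forall (r : rsym L) (args : forall i : fin (@rarity L r), dom M (@rsort L r i)),
     (forall i, fc_dom A _ (args i)) -> P r = false ->
     (fc_rel A r args <-> fc_rel B r args)).

Definition Fn_lambda_closed {L : Language} (P : rsym L -> bool)
  (K : Structure L -> Prop) (Kap : Type) (M : Structure (sublang L P))
  (Lam : Type) : Prop :=
  forall (I : Type) (ltI : I -> I -> Prop), well_order ltI -> card_lt I Lam ->
  forall A : I -> FnCand P M,
    (forall i, in_Fn P K Kap M (A i)) ->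
    (forall i j, ltI i j -> fc_sub (A i) (A j)) ->
    exists B : FnCand P M, in_Fn P K Kap M B /\ forall i, fc_sub (A i) B.

(* Main.v *)
Require Import Defs.
From Stdlib Require Import Arith List ClassicalEpsilon Classical FunctionalExtensionality ProofIrrelevance FinFun Wellfounded Lia.

Definition cid := constructive_indefinite_description.

Lemma cle_refl A : card_le A A.
Proof. exists (fun x => x); auto. Qed.

Lemma cle_trans A B C : card_le A B -> card_le B C -> card_le A C.
Proof. intros [f Hf] [g Hg]; exists (fun x => g (f x)); auto. Qed.

Lemma clt_le_trans A B C : card_le A B -> card_lt B C -> card_lt A C.
Proof.
  intros H [H1 H2]; split. eapply cle_trans; eauto.
  intro H3; apply H2; eapply cle_trans; eauto.
Qed.

Lemma cle_prod A A' B B' : card_le A A' -> card_le B B' -> card_le (A * B) (A' * B').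
Proof.
  intros [f Hf] [g Hg]; exists (fun p => (f (fst p), g (snd p))).
  intros [a b] [c d] E; injection E; intros; f_equal; auto.
Qed.

Lemma cle_sig A (P : A -> Prop) : card_le {x | P x} A.
Proof. exists (@proj1_sig _ _); intros [x p] [y q] E; simpl in E; subst; f_equal; apply proof_irrelevance. Qed.

Lemma sig_eq {A} {P : A -> Prop} (x y : {a | P a}) : proj1_sig x = proj1_sig y -> x = y.
Proof. destruct x, y; simpl; intros; subst; f_equal; apply proof_irrelevance. Qed.

Definition cover (A : Type) := exists l : list A, forall x, In x l.

Lemma fin_cover A : ~ card_le nat A -> cover A.
Proof.
  intros H. apply NNPP; intro Hc.
  assert (Hn : forall l : list A, exists x, ~ In x l).
  { intro l. apply NNPP; intro H2; apply Hc; exists l; intro x.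
    apply NNPP; intro H3; apply H2; exists x; auto. }
  set (nx := fun l => proj1_sig (cid _ _ (Hn l))).
  assert (Hnx : forall l, ~ In (nx l) l) by (intro l; exact (proj2_sig (cid _ _ (Hn l)))).
  set (lst := fix lst n := match n with 0 => nil | S n => nx (lst n) :: lst n end).
  assert (Hin : forall n k, n < k -> In (nx (lst n)) (lst k)).
  { intros n k; induction k; intro Hk. lia.
    simpl. destruct (Nat.eq_dec n k). subst; left; auto. right; apply IHk; lia. }
  apply H; exists (fun n => nx (lst n)); intros x y E.
  destruct (Nat.lt_total x y) as [h|[h|h]]; auto.
  - exfalso; apply (Hnx (lst y)); rewrite <- E; apply Hin; auto.
  - exfalso; apply (Hnx (lst x)); rewrite E; apply Hin; auto.
Qed.

Lemma cover_fin A : cover A -> ~ card_le nat A.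
Proof.
  intros [l Hl] [f Hf].
  assert (H := @NoDup_incl_length _ (map f (seq 0 (S (length l)))) l).
  rewrite length_map, length_seq in H.
  assert (S (length l) <= length l).
  { apply H. apply Injective_map_NoDup; [exact Hf| apply seq_NoDup].
    intros x _; apply Hl. }
  lia.
Qed.

Lemma cover_prod A B : cover A -> cover B -> cover (A * B).
Proof. intros [l1 H1] [l2 H2]; exists (list_prod l1 l2); intros [a b]; apply in_prod; auto. Qed.

Lemma cover_option A : cover A -> cover (option A).
Proof. intros [l H]; exists (None :: map Some l); intros [a|]; simpl; auto.
  right; apply in_map; auto. Qed.

Lemma cover_nat A : cover A -> card_le A nat.
Proof.
  intros [l H].
  assert (Hn : forall x, exists n, nth_error l n = Some x) by (intro; apply In_nth_error; auto).
  exists (fun x => proj1_sig (cid _ _ (Hn x))); intros x y E.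
  pose proof (proj2_sig (cid _ _ (Hn x))) as Hx; pose proof (proj2_sig (cid _ _ (Hn y))) as Hy.
  simpl in *; rewrite E in Hx; rewrite Hx in Hy; injection Hy; auto.
Qed.

Lemma opt_le A : card_le nat A -> card_le (option A) A.
Proof.
  intros [h Hh].
  set (f := fun o : option A => match o with None => h 0 | Some x =>
        match excluded_middle_informative (exists n, h n = x) with
        | left e => h (S (proj1_sig (cid _ _ e))) | right _ => x end end).
  exists f; intros [x|] [y|]; unfold f; simpl.
  - destruct (excluded_middle_informative (exists n, h n = x)) as [e|ne];
    destruct (excluded_middle_informative (exists n, h n = y)) as [e'|ne']; intro E.
    + pose proof (proj2_sig (cid _ _ e)); pose proof (proj2_sig (cid _ _ e')); simpl in *.
      apply Hh in E; injection E; intro E2. rewrite E2 in H. congruence.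
    + exfalso; apply ne'; eexists; eauto.
    + exfalso; apply ne; eexists; eauto.
    + congruence.
  - destruct (excluded_middle_informative (exists n, h n = x)) as [e|ne]; intro E.
    + apply Hh in E; discriminate.
    + exfalso; apply ne; eauto.
  - destruct (excluded_middle_informative (exists n, h n = y)) as [e|ne]; intro E.
    + apply Hh in E; discriminate.
    + exfalso; apply ne; eauto.
  - auto.
Qed.

Lemma wf_min {T} (R : T -> T -> Prop) : well_founded R ->
  forall Q : T -> Prop, (exists x, Q x) -> exists x, Q x /\ forall y, R y x -> ~ Q y.
Proof.
  intros wf Q [x Hx]. induction (wf x) as [x _ IH].
  destruct (classic (exists y, R y x /\ Q y)) as [[y [H1 H2]]|N].
  - eapply IH; eauto.
  - exists x; split; auto. intros y H1 H2; apply N; eauto.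
Qed.

Lemma wo_pull {A B} (f : A -> B) (RB : B -> B -> Prop) :
  (forall x y, f x = f y -> x = y) -> well_order RB -> well_order (fun x y => RB (f x) (f y)).
Proof.
  intros Hf [H1 [H2 [H3 H4]]]; split; [|split; [|split]].
  - intros x; apply H1.
  - intros x y z; apply H2.
  - intros x y; destruct (H3 (f x) (f y)) as [h|[h|h]]; auto.
  - apply wf_inverse_image; auto.
Qed.

Section Emb.
Variables (W V : Type) (ltW : W -> W -> Prop) (ltV : V -> V -> Prop).
Hypothesis woW : well_order ltW.
Hypothesis woV : well_order ltV.
Hypothesis small : forall w, ~ card_le V {w' | ltW w' w}.

Lemma step_ex (w : W) (rec : forall w', ltW w' w -> V) :
  exists v, (forall w' h, rec w' h <> v) /\ (forall v', ltV v' v -> exists w' h, rec w' h = v').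
Proof.
  set (Good := fun v => forall w' h, rec w' h <> v).
  assert (exists v, Good v).
  { apply NNPP; intro N. apply (small w).
    assert (Hv : forall v, exists p : {w' | ltW w' w}, rec (proj1_sig p) (proj2_sig p) = v).
    { intro v. apply NNPP; intro N2; apply N; exists v; intros w' h E; apply N2.
      exists (exist _ w' h); auto. }
    exists (fun v => proj1_sig (cid _ _ (Hv v))); intros x y E.
    pose proof (proj2_sig (cid _ _ (Hv x))); pose proof (proj2_sig (cid _ _ (Hv y))).
    simpl in *. rewrite E in H. congruence. }
  destruct (wf_min ltV (proj2 (proj2 (proj2 woV))) Good H) as [v [Hv Hm]].
  exists v; split; auto. intros v' Hv'. specialize (Hm v' Hv').
  apply NNPP; intro N; apply Hm; intros w' h E; apply N; eauto.
Qed.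

Definition Fstep (w : W) (rec : forall w', ltW w' w -> V) : V :=
  proj1_sig (cid _ _ (step_ex w rec)).

Definition Femb : W -> V := Fix (proj2 (proj2 (proj2 woW))) (fun _ => V) Fstep.

Lemma Femb_eq w : Femb w = Fstep w (fun w' _ => Femb w').
Proof.
  unfold Femb; rewrite Fix_eq; auto.
  intros x f g Hfg. assert (f = g) by (apply functional_extensionality_dep; intro;
    apply functional_extensionality_dep; auto). subst; auto.
Qed.

Lemma Femb_spec w : (forall w', ltW w' w -> Femb w' <> Femb w) /\
  (forall v, ltV v (Femb w) -> exists w', ltW w' w /\ Femb w' = v).
Proof.
  pose proof (proj2_sig (cid _ _ (step_ex w (fun w' _ => Femb w')))) as [H1 H2].
  fold (Fstep w (fun w' _ => Femb w')) in H1, H2. rewrite <- Femb_eq in H1, H2.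
  split. exact H1. intros v' hv; destruct (H2 v' hv) as [w' [h' E]]; eauto.
Qed.

Lemma Femb_inj : forall x y, Femb x = Femb y -> x = y.
Proof.
  intros x y E. destruct woW as [_ [_ [tot _]]].
  destruct (tot x y) as [h|[h|h]]; auto.
  - exfalso; apply (proj1 (Femb_spec y) x h E).
  - exfalso; apply (proj1 (Femb_spec x) y h); auto.
Qed.
End Emb.
Section Kap.
Variables (Kap : Type) (R : Kap -> Kap -> Prop).
Hypothesis HK : is_infinite_cardinal R.

Definition seg (a : Kap) := {b | R b a}.
Definition le x y := R x y \/ x = y.

Lemma R_irr : forall x, ~ R x x. Proof. apply HK. Qed.
Lemma R_trans : forall x y z, R x y -> R y z -> R x z. Proof. apply HK. Qed.
Lemma R_tot : forall x y, R x y \/ x = y \/ R y x. Proof. apply HK. Qed.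
Lemma R_wf : well_founded R. Proof. apply HK. Qed.
Lemma R_wo : well_order R. Proof. apply HK. Qed.

Lemma le_trans x y z : le x y -> le y z -> le x z.
Proof. unfold le; intros [h|h] [h'|h']; subst; eauto using R_trans. Qed.

Definition mx x y := if excluded_middle_informative (R x y) then y else x.
Lemma mx_l x y : le x (mx x y).
Proof. unfold mx, le; destruct (excluded_middle_informative (R x y)); auto. Qed.
Lemma mx_r x y : le y (mx x y).
Proof. unfold mx, le; destruct (excluded_middle_informative (R x y)); auto.
  destruct (R_tot x y) as [h|[h|h]]; subst; tauto. Qed.
Lemma mx_lt x y m : R x m -> R y m -> R (mx x y) m.
Proof. unfold mx; destruct (excluded_middle_informative (R x y)); auto. Qed.

Definition G (p q : Kap * Kap) : Prop :=
  R (mx (fst p) (snd p)) (mx (fst q) (snd q)) \/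
  (mx (fst p) (snd p) = mx (fst q) (snd q) /\
   (R (fst p) (fst q) \/ (fst p = fst q /\ R (snd p) (snd q)))).

Lemma G_wo : well_order G.
Proof.
  split; [|split; [|split]].
  - intros [a b]; unfold G; simpl. intros [h|[_ [h|[_ h]]]]; eapply R_irr; eauto.
  - intros [a b] [c d] [e f]; unfold G; simpl.
    generalize (mx a b) (mx c d) (mx e f); intros m1 m2 m3.
    intros [h|[h [h'|[h' h'']]]] [k|[k [k'|[k' k'']]]]; subst;
      eauto 7 using R_trans.
  - intros [a b] [c d]; unfold G; simpl.
    destruct (R_tot (mx a b) (mx c d)) as [h|[h|h]]; [tauto| |tauto].
    destruct (R_tot a c) as [k|[k|k]]; [tauto| |right; right; right; split; auto].
    subst c. destruct (R_tot b d) as [l|[l|l]]; [tauto|subst; tauto|right; right; right; split; auto].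
  - assert (forall m p, mx (fst p) (snd p) = m -> Acc G p).
    { intro m; induction (R_wf m) as [m _ IHm].
      intros [a b]; simpl. revert b. induction (R_wf a) as [a _ IHa].
      intro b; induction (R_wf b) as [b _ IHb]. intro E.
      constructor; intros [c d]; unfold G; simpl.
      intros [h|[h [h'|[h' h'']]]].
      - eapply IHm; [rewrite <- E; exact h| reflexivity].
      - eapply IHa; eauto. simpl; congruence.
      - subst. apply IHb; auto. }
    intro p; eapply H; eauto.
Qed.

Lemma seg_mono a b : le a b -> card_le (seg a) (seg b).
Proof.
  intros H. assert (Hx : forall x, R x a -> R x b).
  { intros x hx; destruct H; subst; eauto using R_trans. }
  exists (fun x => exist _ (proj1_sig x) (Hx _ (proj2_sig x))).
  intros x y E; apply sig_eq; apply (f_equal (@proj1_sig _ _)) in E; auto.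
Qed.

Lemma seg_Kap a : card_le (seg a) Kap.
Proof. apply cle_sig. Qed.

Definition Rs (m : Kap) (x y : seg m) := R (proj1_sig x) (proj1_sig y).
Lemma Rs_wo m : well_order (Rs m).
Proof. apply (wo_pull (@proj1_sig _ _)); [apply sig_eq|apply R_wo]. Qed.

Definition Gs (m : Kap) (p q : seg m * seg m) :=
  G (proj1_sig (fst p), proj1_sig (snd p)) (proj1_sig (fst q), proj1_sig (snd q)).
Lemma Gs_wo m : well_order (Gs m).
Proof.
  apply (wo_pull (fun p : seg m * seg m => (proj1_sig (fst p), proj1_sig (snd p)))).
  - intros [a b] [c d] E; simpl in E; injection E; intros; f_equal; apply sig_eq; auto.
  - apply G_wo.
Qed.

Definition opt (c x : Kap) : option (seg c) :=
  match excluded_middle_informative (R x c) with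
  | left h => Some (exist _ x h) | right _ => None end.

Lemma opt_inj c x y : le x c -> le y c -> opt c x = opt c y -> x = y.
Proof.
  unfold opt; destruct (excluded_middle_informative (R x c));
  destruct (excluded_middle_informative (R y c)); intros hx hy E; try discriminate.
  - injection E; auto.
  - destruct hx; destruct hy; try tauto; congruence.
Qed.

Lemma Q : forall m, card_le nat (seg m) -> card_le (seg m * seg m) (seg m).
Proof.
  intro m; induction (R_wf m) as [m _ IH]; intro Hinf.
  destruct (wf_min R R_wf (fun b => card_le (seg m) (seg b)) (ex_intro _ m (cle_refl _)))
    as [ms [Hms Hmin]].
  assert (Hle : le ms m).
  { destruct (R_tot ms m) as [h|[h|h]]; [left|right|]; auto.
    exfalso; apply (Hmin m h (cle_refl _)). }
  destruct Hle as [Hlt|Heq].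
  - assert (Hinf' : card_le nat (seg ms)) by (eapply cle_trans; eauto).
    eapply cle_trans; [apply cle_prod; exact Hms|].
    eapply cle_trans; [apply (IH ms Hlt Hinf')|]. apply seg_mono; left; auto.
  - subst ms.
    enough (Hsm : forall w, ~ card_le (seg m) {w' | Gs m w' w}).
    { exists (Femb _ _ (Gs m) (Rs m) (Gs_wo m) (Rs_wo m) Hsm). apply Femb_inj. }
    intros [a b] Hbad.
    set (c := mx (proj1_sig a) (proj1_sig b)).
    assert (Hc : R c m) by (apply mx_lt; [exact (proj2_sig a)| exact (proj2_sig b)]).
    assert (Hw : forall w' : {w' | Gs m w' (a, b)},
      le (proj1_sig (fst (proj1_sig w'))) c /\ le (proj1_sig (snd (proj1_sig w'))) c).
    { intros [[x y] Hxy]; simpl. unfold Gs, G in Hxy; simpl in Hxy.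
      assert (le (mx (proj1_sig x) (proj1_sig y)) c).
      { destruct Hxy as [h|[h _]]; [left|right]; auto. }
      split; [eapply le_trans; [apply mx_l|exact H] | eapply le_trans; [apply mx_r|exact H]]. }
    assert (Hb2 : card_le (seg m) (option (seg c) * option (seg c))).
    { eapply cle_trans; [exact Hbad|].
      exists (fun w' => (opt c (proj1_sig (fst (proj1_sig w'))), opt c (proj1_sig (snd (proj1_sig w'))))).
      intros w1 w2 E. injection E; intros E2 E1.
      destruct (Hw w1) as [h1 h2]; destruct (Hw w2) as [k1 k2].
      apply opt_inj in E1; auto. apply opt_inj in E2; auto.
      apply sig_eq. destruct w1 as [[x1 y1] p1]; destruct w2 as [[x2 y2] p2]; simpl in *.
      f_equal; apply sig_eq; auto. }
    destruct (classic (card_le nat (seg c))) as [Hi|Hf].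
    + apply (Hmin c Hc). eapply cle_trans; [exact Hb2|].
      eapply cle_trans; [apply cle_prod; apply opt_le; exact Hi|]. apply IH; auto.
    + apply fin_cover in Hf. apply (cover_fin _ (cover_prod _ _ (cover_option _ Hf) (cover_option _ Hf))).
      eapply cle_trans; eauto.
Qed.

Lemma Psq : forall e, card_lt (seg e * seg e) Kap.
Proof.
  intro e. destruct (classic (card_le nat (seg e))) as [Hi|Hf].
  - pose proof (Q e Hi) as q. split. eapply cle_trans; [exact q| apply seg_Kap].
    intro H. apply (proj2 (proj2 HK) e). eapply cle_trans; eauto.
  - apply fin_cover in Hf. pose proof (cover_prod _ _ Hf Hf) as Hc. split.
    + eapply cle_trans; [apply cover_nat; exact Hc| exact (proj1 (proj2 HK))].
    + intro H; apply (cover_fin _ Hc). eapply cle_trans; [exact (proj1 (proj2 HK))| exact H].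
Qed.

Lemma Segl : forall X : Type, card_lt X Kap -> exists a, card_le X (seg a).
Proof.
  intros X [[g Hg] Hn].
  set (S := {b : Kap | exists x, g x = b}).
  set (RS := fun s t : S => R (proj1_sig s) (proj1_sig t)).
  assert (woS : well_order RS) by (apply (wo_pull (@proj1_sig _ _)); [apply sig_eq|apply R_wo]).
  assert (small : forall s, ~ card_le Kap {s' | RS s' s}).
  { intros s H. apply (proj2 (proj2 HK) (proj1_sig s)). eapply cle_trans; [exact H|].
    exists (fun s' : {s' | RS s' s} => exist (fun b => R b (proj1_sig s)) (proj1_sig (proj1_sig s')) (proj2_sig s')).
    intros x y E. apply (f_equal (@proj1_sig _ _)) in E; simpl in E. apply sig_eq, sig_eq; auto. }
  set (F := Femb S Kap RS R woS R_wo small).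
  destruct (classic (exists a, forall s, F s <> a)) as [[a Ha]|N].
  - exists a.
    assert (Hlt : forall s, R (F s) a).
    { intro s. destruct (R_tot (F s) a) as [h|[h|h]]; auto. exfalso; apply (Ha s h).
      destruct (proj2 (Femb_spec _ _ _ _ woS R_wo small s) a h) as [s' [_ E]].
      exfalso; apply (Ha s' E). }
    eapply cle_trans.
    + exists (fun x => exist (fun b => exists x, g x = b) (g x) (ex_intro _ x eq_refl)).
      intros x y E; apply Hg; apply (f_equal (@proj1_sig _ _)) in E; auto.
    + exists (fun s => exist (fun b => R b a) (F s) (Hlt s)).
      intros x y E; apply (f_equal (@proj1_sig _ _)) in E; simpl in E.
      apply (Femb_inj _ _ _ _ woS R_wo small); auto.
  - exfalso; apply Hn.
    assert (Hs : forall a, exists s, F s = a).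
    { intro a; apply NNPP; intro N2; apply N; exists a; intros s E; apply N2; eauto. }
    eapply cle_trans.
    + exists (fun a => proj1_sig (cid _ _ (Hs a))). intros x y E.
      pose proof (proj2_sig (cid _ _ (Hs x))); pose proof (proj2_sig (cid _ _ (Hs y))).
      simpl in *; congruence.
    + exists (fun s : S => proj1_sig (cid _ _ (proj2_sig s))). intros x y E.
      pose proof (proj2_sig (cid _ _ (proj2_sig x))); pose proof (proj2_sig (cid _ _ (proj2_sig y))).
      simpl in *. apply sig_eq. rewrite E in H. congruence.
Qed.

Variable Lam : Type.
Hypothesis Hcf : le_cf Lam R.

Lemma Lam_Kap : card_le Lam Kap.
Proof.
  destruct (Hcf (fun _ => True)) as [f Hf].
  - intro a; exists a; auto.
  - eapply cle_trans; [exists f; exact Hf| apply cle_sig].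
Qed.

Lemma SUM : forall (I : Type) (Y : I -> Type), card_lt I Lam ->
  (forall i, card_lt (Y i) Kap) -> card_lt {i & Y i} Kap.
Proof.
  intros I Y HI HY.
  assert (HIK : card_lt I Kap).
  { split. eapply cle_trans; [exact (proj1 HI)| apply Lam_Kap].
    intro H; apply (proj2 HI); eapply cle_trans; [apply Lam_Kap| exact H]. }
  destruct (Segl I HIK) as [d Hd].
  assert (Hs : forall i, exists a, card_le (Y i) (seg a)) by (intro i; apply Segl; auto).
  set (a := fun i => proj1_sig (cid _ _ (Hs i))).
  assert (Ha : forall i, card_le (Y i) (seg (a i))) by (intro i; exact (proj2_sig (cid _ _ (Hs i)))).
  set (T := fun b => exists i, a i = b).
  destruct (classic (cofinal R T)) as [Hcof|Hncof].
  - exfalso. destruct (Hcf T Hcof) as [f Hf]. apply (proj2 HI).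
    exists (fun l => proj1_sig (cid _ _ (proj2_sig (f l)))). intros x y E.
    pose proof (proj2_sig (cid _ _ (proj2_sig (f x)))); pose proof (proj2_sig (cid _ _ (proj2_sig (f y)))).
    simpl in *. apply Hf, sig_eq. rewrite E in H. congruence.
  - apply not_all_ex_not in Hncof. destruct Hncof as [c Hc].
    assert (Hac : forall i, R (a i) c).
    { intro i. destruct (R_tot (a i) c) as [h|[h|h]]; auto; exfalso; apply Hc; exists (a i);
      split; try (exists i; auto; fail). right; auto. left; auto. }
    assert (He : exists e, le c e /\ le d e).
    { destruct (R_tot c d) as [h|[h|h]].
      - exists d; split; [left|right]; auto.
      - exists d; split; right; auto.
      - exists c; split; [right|left]; auto. }
    destruct He as [e [Hce Hde]].
    assert (Hψ : forall i, card_le (Y i) (seg e)).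
    { intro i. eapply cle_trans; [apply Ha|]. apply seg_mono. eapply le_trans; [left; apply Hac|exact Hce]. }
    set (ψ := fun i => proj1_sig (cid _ _ (Hψ i))).
    assert (Hψi : forall i x y, ψ i x = ψ i y -> x = y) by (intro i; exact (proj2_sig (cid _ _ (Hψ i)))).
    destruct (cle_trans _ _ _ Hd (seg_mono _ _ Hde)) as [φ Hφ].
    eapply clt_le_trans; [| apply (Psq e)].
    exists (fun p => (φ (projT1 p), ψ (projT1 p) (projT2 p))).
    intros [i1 y1] [i2 y2] E; simpl in E.
    pose proof (f_equal fst E) as E1; simpl in E1. apply Hφ in E1; subst i2.
    pose proof (f_equal snd E) as E2; simpl in E2. apply Hψi in E2; subst; auto.
Qed.
End Kap.
Section Glue.
Variables (L : Language) (P : rsym L -> bool) (M : Structure (sublang L P)).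

Lemma iso_sub (T X : FnCand P M) (HT : forall s x, fc_dom X s x -> fc_dom T s x)
  (H : closed L (fc_struct T) (fun s x => fc_dom X s (proj1_sig x)))
  (Hrel : forall r a, (forall k, fc_dom X _ (a k)) -> P r = false ->
      (fc_rel X r a <-> fc_rel T r a)) :
  isomorphic L (fc_struct X) (induce L (fc_struct T) (fun s x => fc_dom X s (proj1_sig x)) H)
  /\ isomorphic L (induce L (fc_struct T) (fun s x => fc_dom X s (proj1_sig x)) H) (fc_struct X).
Proof.
  split.
  - exists (fun s (x : dom (fc_struct X) s) =>
      exist (fun y : dom (fc_struct T) s => fc_dom X s (proj1_sig y))
        (exist (fun y => fc_dom T s y) (proj1_sig x) (HT _ _ (proj2_sig x))) (proj2_sig x)).
    split; [split; [|split]|].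
    + intros s x y E. apply (f_equal (@proj1_sig _ _)) in E. apply (f_equal (@proj1_sig _ _)) in E.
      apply sig_eq; exact E.
    + intros f args. apply sig_eq, sig_eq. reflexivity.
    + intros r args. simpl. split; intros [h1 h2]; split; auto.
      * intro hp; apply (Hrel r (fun i => proj1_sig (args i))); auto. intro k; exact (proj2_sig (args k)).
      * intro hp; apply (Hrel r (fun i => proj1_sig (args i))); auto. intro k; exact (proj2_sig (args k)).
    + intros s y. exists (exist _ (proj1_sig (proj1_sig y)) (proj2_sig y)). apply sig_eq, sig_eq. reflexivity.
  - exists (fun s (y : dom (induce L (fc_struct T) (fun s x => fc_dom X s (proj1_sig x)) H) s) =>
       exist (fun z => fc_dom X s z) (proj1_sig (proj1_sig y)) (proj2_sig y)).
    split; [split; [|split]|].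
    + intros s x y E. apply (f_equal (@proj1_sig _ _)) in E. apply sig_eq, sig_eq; exact E.
    + intros f args. apply sig_eq. reflexivity.
    + intros r args. simpl. split; intros [h1 h2]; split; auto.
      * intro hp; apply (Hrel r (fun i => proj1_sig (proj1_sig (args i)))); auto. intro k; exact (proj2_sig (args k)).
      * intro hp; apply (Hrel r (fun i => proj1_sig (proj1_sig (args i)))); auto. intro k; exact (proj2_sig (args k)).
    + intros s y. exists (exist _ (exist _ (proj1_sig y) (HT _ _ (proj2_sig y))) (proj2_sig y)).
      apply sig_eq. reflexivity.
Qed.
End Glue.

Theorem proposition3p2 (L : Language) (P : rsym L -> bool)
  (K : Structure L -> Prop)
  (Kap : Type) (ltKap : Kap -> Kap -> Prop) (Lam : Type)
  (M : Structure (sublang L P)) :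
  strong_fraisse_class L K ->
  strong_fraisse_class (sublang L P) (restrict_age P K) ->
  is_infinite_cardinal ltKap ->
  models_Fr (sublang L P) Kap (restrict_age P K) M ->
  le_cf Lam ltKap ->
  union_closed L Lam K ->
  Fn_lambda_closed P K Kap M Lam.
Proof.
  intros [[Hage _] _] _ HK _ Hcf Hun.
  intros Ix ltI wo HI A HA Hch.
  set (RU := fun r (a : forall k : fin (@rarity L r), dom M (@rsort L r k)) =>
         exists i, (forall k, fc_dom (A i) _ (a k)) /\ fc_rel (A i) r a).
  assert (relU : forall i r a, (forall k, fc_dom (A i) _ (a k)) -> P r = false ->
            (fc_rel (A i) r a <-> RU r a)).
  { intros i r a hd hp; split.
    - intro h; exists i; auto.
    - intros [j [hj hr]].
      destruct (proj1 (proj2 (proj2 wo)) i j) as [h|[h|h]].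
      + apply (proj2 (Hch i j h) r a hd hp); auto.
      + subst; auto.
      + apply (proj2 (Hch j i h) r a hj hp); auto. }
  set (Top := Build_FnCand L P M (fun _ _ => True) (fun _ _ _ => Logic.I) RU).
  set (D := fun i s (x : dom (fc_struct Top) s) => fc_dom (A i) s (proj1_sig x)).
  assert (H : forall i, closed L (fc_struct Top) (D i)).
  { intros i f args h. exact (fc_closed (A i) f (fun k => proj1_sig (args k)) h). }
  assert (HKi : forall i, K (induce L (fc_struct Top) (D i) (H i))).
  { intro i. eapply Hage; [exact (proj1 (HA i))|].
    exact (proj1 (iso_sub L P M Top (A i) (fun _ _ _ => Logic.I) (H i) (fun r a hd hp => relU i r a hd hp))). }
  assert (chain : forall i j, ltI i j -> forall s x, D i s x -> D j s x).
  { intros i j h s x. exact (proj1 (Hch i j h) s (proj1_sig x)). }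
  destruct (Hun Ix ltI wo HI (fc_struct Top) D H HKi chain) as [HU HKU].
  assert (HBc : closed (sublang L P) M (fun s x => exists i, fc_dom (A i) s x)).
  { intros f args h. exact (HU f (fun k => exist _ (args k) Logic.I) h). }
  set (B := Build_FnCand L P M (fun s x => exists i, fc_dom (A i) s x) HBc RU).
  exists B. split; [split|].
  - eapply Hage; [exact HKU|].
    exact (proj2 (iso_sub L P M Top B (fun _ _ _ => Logic.I) HU (fun r a hd hp => iff_refl _))).
  -
    assert (HG : forall i, exists X : forall s, dom (fc_struct (A i)) s -> Prop,
      card_lt {s : sort L & {x : dom (fc_struct (A i)) s | X s x}} Kap /\
      generates L (fc_struct (A i)) X) by (intro i; exact (proj2 (HA i))).
    set (Xf := fun i => proj1_sig (cid _ _ (HG i))).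
    assert (HXf : forall i, card_lt {s : sort L & {x : dom (fc_struct (A i)) s | Xf i s x}} Kap /\
      generates L (fc_struct (A i)) (Xf i)) by (intro i; exact (proj2_sig (cid _ _ (HG i)))).
    set (XB := fun s (y : dom (fc_struct B) s) => exists i (x' : dom (fc_struct (A i)) s),
                 Xf i s x' /\ proj1_sig x' = proj1_sig y).
    exists XB. split.
    + eapply clt_le_trans; [| exact (SUM Kap ltKap HK Lam Hcf Ix
          (fun i => {s : sort L & {x : dom (fc_struct (A i)) s | Xf i s x}}) HI (fun i => proj1 (HXf i)))].
      assert (Hch1 : forall (p : {s : sort L & {y : dom (fc_struct B) s | XB s y}}),
         {q : {i : Ix & {s : sort L & {x : dom (fc_struct (A i)) s | Xf i s x}}} |
           existT (dom M) (projT1 (projT2 q)) (proj1_sig (proj1_sig (projT2 (projT2 q)))) =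
           existT (dom M) (projT1 p) (proj1_sig (proj1_sig (projT2 p)))}).
      { intros [s [y hy]]. apply cid. destruct hy as [i [x' [hx E]]].
        exists (existT _ i (existT _ s (exist _ x' hx))). simpl. rewrite E. reflexivity. }
      exists (fun p => proj1_sig (Hch1 p)).
      intros p1 p2 E.
      pose proof (proj2_sig (Hch1 p1)) as E1; pose proof (proj2_sig (Hch1 p2)) as E2.
      rewrite E in E1. pose proof (eq_trans (eq_sym E1) E2) as E3. clear E1 E2. rename E3 into E2.
      destruct p1 as [s1 [y1 h1]]; destruct p2 as [s2 [y2 h2]]; simpl in E2.
      pose proof (EqdepFacts.eq_sigT_fst E2) as Es; subst s2.
      apply inj_pair2 in E2.
      assert (y1 = y2) by (apply sig_eq; auto). subst y2.
      assert (h1 = h2) by apply proof_irrelevance. subst; reflexivity.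
    + intros D' HD' Hsub.
      assert (Htr : forall s (z1 z2 : dom (fc_struct B) s), proj1_sig z1 = proj1_sig z2 -> D' s z1 -> D' s z2).
      { intros s z1 z2 E h. rewrite <- (sig_eq _ _ E); auto. }
      assert (Hi : forall i s (x : dom (fc_struct (A i)) s),
                 D' s (exist _ (proj1_sig x) (ex_intro _ i (proj2_sig x)))).
      { intro i. apply (proj2 (HXf i)).
        - intros f args hargs.
          eapply Htr; [| exact (HD' f (fun k => exist _ (proj1_sig (args k)) (ex_intro _ i (proj2_sig (args k)))) hargs)].
          reflexivity.
        - intros s x hx. apply Hsub. exists i, x; auto. }
      intros s [x [i hi]]. exact (Hi i s (exist _ x hi)).
  - intro i. split.
    + intros s x h; exists i; exact h.
    + intros r a hd hp. exact (relU i r a hd hp).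
Qed.
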